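(* Let $Y=\{(x,y)\in\mathbb{R}^2:(x/a)^2+y^2=1\}$ with $1<a\le\sqrt2$, and let $p\in Y$. The only local extrema of $d_p:Y\to\mathbb{R}$, $d_p(q)=d(p,q)$, are a global minimum at $p$ and a global maximum at $h^{-1}(p)$. Consequently, every nonempty intersection of $Y$ with a Euclidean ball centered at a point of $Y$ is either contractible or all of $Y$.
   Context: $d$ is the Euclidean metric on $\mathbb{R}^2$. $h:Y\to Y$ sends $p$ to the unique point of the intersection of the normal line to $Y$ at $p$ with $Y\setminus\{p\}$; for $1<a\le\sqrt2$ this map is a bijection, and $h^{-1}$ denotes its inverse. *)

(* Defs.v *)
From Stdlib Require Import Reals Lra.
Open Scope R_scope.

Definition point : Type := (R * R)%type.

Definition edist (p q : point) : R :=
  sqrt ((fst p - fst q) ^ 2 + (snd p - snd q) ^ 2).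

Definition onY (a : R) (p : point) : Prop :=
  (fst p / a) ^ 2 + (snd p) ^ 2 = 1.

(* The normal line to Y at p = (x,y) is p + t * grad, grad = (x/a^2, y)
   (gradient of (x/a)^2 + y^2). *)
Definition on_normal (a : R) (p q : point) : Prop :=
  exists t : R, fst q = fst p + t * (fst p / a ^ 2) /\
                snd q = snd p + t * snd p.

(* h_rel a p q  <->  q = h(p): q is a point of Y \ {p} on the normal line
   to Y at p (by the context this point is unique). Hence h_rel a q p
   means q = h^{-1}(p). *)
Definition h_rel (a : R) (p q : point) : Prop :=
  onY a p /\ onY a q /\ q <> p /\ on_normal a p q.

Definition local_min_on (S : point -> Prop) (f : point -> R) (q : point) : Prop :=
  S q /\ exists eps, 0 < eps /\
    forall r, S r -> edist r q < eps -> f q <= f r.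
Definition local_max_on (S : point -> Prop) (f : point -> R) (q : point) : Prop :=
  S q /\ exists eps, 0 < eps /\
    forall r, S r -> edist r q < eps -> f r <= f q.
Definition local_extremum_on (S : point -> Prop) (f : point -> R) (q : point) : Prop :=
  local_min_on S f q \/ local_max_on S f q.

Definition global_min_on (S : point -> Prop) (f : point -> R) (q : point) : Prop :=
  S q /\ forall r, S r -> f q <= f r.
Definition global_max_on (S : point -> Prop) (f : point -> R) (q : point) : Prop :=
  S q /\ forall r, S r -> f r <= f q.

Definition contractible (S : point -> Prop) : Prop :=
  exists (x0 : point) (H : R -> point -> point),
    S x0 /\
    (forall t x, 0 <= t <= 1 -> S x -> S (H t x)) /\
    (forall x, S x -> H 0 x = x) /\
    (forall x, S x -> H 1 x = x0) /\
    (forall t x, 0 <= t <= 1 -> S x ->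
       forall eps, 0 < eps -> exists delta, 0 < delta /\
         forall t' x', 0 <= t' <= 1 -> S x' ->
           Rabs (t - t') < delta -> edist x x' < delta ->
           edist (H t x) (H t' x') < eps).

Definition open_ball (c : point) (r : R) (q : point) : Prop := edist c q < r.
Definition closed_ball (c : point) (r : R) (q : point) : Prop := edist c q <= r.

(* Main.v *)
Require Import Defs.
From Stdlib Require Import Reals Lra Psatz Ranalysis5 Classical.
From Coquelicot Require Import Coquelicot.
Open Scope R_scope.

Definition Fd (a : R) (p : point) (th : R) : R :=
  (fst p - a * cos th) ^ 2 + (snd p - sin th) ^ 2.
Definition Fd' (a : R) (p : point) (th : R) : R :=
  2 * (fst p - a * cos th) * (a * sin th) + 2 * (snd p - sin th) * (- cos th).
Definition Wf (b t0 be : R) : R :=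
  cos be / sin be + b * sin (t0 + be) * cos (t0 + be) / (1 + b * sin (t0 + be) ^ 2).
Definition Wf' (b t0 be : R) : R :=
  - 1 / (sin be) ^ 2 + b * (1 - (2 + b) * sin (t0 + be) ^ 2) / (1 + b * sin (t0 + be) ^ 2) ^ 2.

Lemma Fd'_W a b t0 be : a ^ 2 = 1 + b -> 0 <= b -> sin be <> 0 ->
  Fd' a (a * cos t0, sin t0) (t0 + 2 * be) =
  4 * sin be ^ 2 * (1 + b * sin (t0 + be) ^ 2) * Wf b t0 be.
Proof.
  intros ha hb hs.
  assert (hd : 1 + b * sin (t0 + be) ^ 2 <> 0) by nra.
  unfold Fd', Wf; simpl fst; simpl snd.
  set (ph := t0 + be).
  replace (t0 + 2 * be) with (ph + be) by (unfold ph; ring).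
  replace t0 with (ph - be) by (unfold ph; ring).
  rewrite cos_plus, sin_plus, cos_minus, sin_minus.
  pose proof (sin2_cos2 ph) as e2. unfold Rsqr in e2.
  field_simplify; auto.
  replace (a ^ 2) with (1 + b) by auto.
  replace (cos ph ^ 2) with (1 - sin ph ^ 2) by nra.
  ring.
Qed.


Lemma div_le1 x y : 0 < y -> x <= y -> x / y <= 1.
Proof. intros. apply Rmult_le_reg_r with y; auto. unfold Rdiv. rewrite Rmult_assoc, Rinv_l; lra. Qed.
Lemma one_le_div x : 0 < x <= 1 -> 1 <= 1 / x.
Proof. intros. apply Rmult_le_reg_r with x; [lra|]. unfold Rdiv. rewrite Rmult_assoc, Rinv_l; lra. Qed.
Lemma one_lt_div x : 0 < x < 1 -> 1 < 1 / x.
Proof. intros. apply Rmult_lt_reg_r with x; [lra|]. unfold Rdiv. rewrite Rmult_assoc, Rinv_l; lra. Qed.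

Lemma A_le1 b S : 0 <= b <= 1 -> 0 <= S <= 1 ->
  b * (1 - (2 + b) * S) / (1 + b * S) ^ 2 <= 1.
Proof. intros. apply div_le1; nra. Qed.

Lemma Wf'_le b t0 be : 0 <= b <= 1 -> sin be <> 0 -> Wf' b t0 be <= 0.
Proof.
  intros hb hs. unfold Wf'.
  pose proof (sin2_cos2 (t0+be)) as e. unfold Rsqr in e.
  pose proof (sin2_cos2 be) as e'. unfold Rsqr in e'.
  pose proof (A_le1 b (sin (t0+be) ^ 2) hb ltac:(nra)).
  assert (1 <= 1 / sin be ^ 2) by (apply one_le_div; nra).
  unfold Rdiv in *. lra.
Qed.

Lemma Wf'_lt b t0 be : 0 <= b <= 1 -> sin be <> 0 -> sin be ^ 2 < 1 -> Wf' b t0 be < 0.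
Proof.
  intros hb hs hs1. unfold Wf'.
  pose proof (sin2_cos2 (t0+be)) as e. unfold Rsqr in e.
  pose proof (A_le1 b (sin (t0+be) ^ 2) hb ltac:(nra)).
  assert (1 < 1 / sin be ^ 2) by (apply one_lt_div; nra).
  unfold Rdiv in *. lra.
Qed.

Lemma Wf_deriv b t0 be : 0 <= b -> sin be <> 0 -> derivable_pt_lim (Wf b t0) be (Wf' b t0 be).
Proof.
  intros hb hs.
  assert (hd : 1 + b * sin (t0 + be) ^ 2 <> 0) by nra.
  apply is_derive_Reals. unfold Wf, Wf'. auto_derive.
  - repeat split; auto.
  - pose proof (sin2_cos2 be) as e1. pose proof (sin2_cos2 (t0+be)) as e2.
    assert (h1 : cos be ^ 2 = 1 - sin be ^ 2) by (unfold Rsqr in *; nra).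
    assert (h2 : cos (t0+be) ^ 2 = 1 - sin (t0+be) ^ 2) by (unfold Rsqr in *; nra).
    field_simplify; [rewrite h1, h2; f_equal; ring | split; [nra|auto] | split; [nra|auto]].
Qed.

Lemma W_strict b t0 x y : 0 <= b <= 1 -> 0 < x -> x < y -> y < PI -> Wf b t0 y < Wf b t0 x.
Proof.
  intros hb hx hxy hy.
  set (m := (x + y) / 2).
  assert (hder : forall c, 0 < c < PI -> derivable_pt_lim (Wf b t0) c (Wf' b t0 c)).
  { intros c hc. apply Wf_deriv; [lra|]. pose proof (sin_gt_0 c); lra. }
  destruct (MVT_cor2 (Wf b t0) (Wf' b t0) x m ltac:(unfold m; lra)) as [c1 [e1 h1]].
  { intros c hc. apply hder. unfold m in hc; lra. }
  destruct (MVT_cor2 (Wf b t0) (Wf' b t0) m y ltac:(unfold m; lra)) as [c2 [e2 h2]].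
  { intros c hc. apply hder. unfold m in hc; lra. }
  assert (s1 : 0 < sin c1) by (apply sin_gt_0; unfold m in *; lra).
  assert (s2 : 0 < sin c2) by (apply sin_gt_0; unfold m in *; lra).
  pose proof (Wf'_le b t0 c1 hb ltac:(lra)) as l1.
  pose proof (Wf'_le b t0 c2 hb ltac:(lra)) as l2.
  assert (hmx : 0 < m - x) by (unfold m; lra).
  assert (hym : 0 < y - m) by (unfold m; lra).
  destruct (Rlt_le_dec (sin c1 ^ 2) 1) as [k1|k1].
  { pose proof (Wf'_lt b t0 c1 hb ltac:(lra) k1). nra. }
  destruct (Rlt_le_dec (sin c2 ^ 2) 1) as [k2|k2].
  { pose proof (Wf'_lt b t0 c2 hb ltac:(lra) k2). nra. }
  exfalso.
  pose proof (sin2_cos2 c1) as q1. pose proof (sin2_cos2 c2) as q2. unfold Rsqr in *.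
  assert (cos c1 = 0) by nra. assert (cos c2 = 0) by nra.
  pose proof (cos_decreasing_1 c1 c2 ltac:(lra) ltac:(unfold m in *; lra) ltac:(unfold m in *; lra) ltac:(lra) ltac:(lra)).
  lra.
Qed.

Lemma Fd_deriv a p th : derivable_pt_lim (Fd a p) th (Fd' a p th).
Proof.
  apply is_derive_Reals. unfold Fd, Fd'. auto_derive; [easy|]. ring.
Qed.

Lemma g_bound b ph : 0 <= b <= 1 ->
  - / 2 <= b * sin ph * cos ph / (1 + b * sin ph ^ 2) <= / 2.
Proof.
  intros hb. pose proof (sin2_cos2 ph) as e. unfold Rsqr in e.
  assert (hD : 0 < 1 + b * sin ph ^ 2) by nra.
  assert (h1 : - (1 + b * sin ph ^ 2) <= 2 * (b * sin ph * cos ph) <= 1 + b * sin ph ^ 2).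
  { pose proof (pow2_ge_0 (sin ph - cos ph)). pose proof (pow2_ge_0 (sin ph + cos ph)).
    pose proof (pow2_ge_0 (sin ph)).
    assert (hh : - 1 <= 2 * (sin ph * cos ph) <= 1) by nra.
    split; nra. }
  split.
  - apply Rmult_le_reg_r with (1 + b * sin ph ^ 2); auto. unfold Rdiv.
    rewrite Rmult_assoc, Rinv_l; lra.
  - apply Rmult_le_reg_r with (1 + b * sin ph ^ 2); auto. unfold Rdiv.
    rewrite Rmult_assoc, Rinv_l; lra.
Qed.

Lemma W_zero b t0 : 0 <= b <= 1 ->
  exists be, PI / 4 <= be <= 3 * (PI / 4) /\ Wf b t0 be = 0.
Proof.
  intros hb.
  pose proof PI_RGT_0.
  assert (hs2 : 0 < sqrt 2) by (apply sqrt_lt_R0; lra).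
  destruct (IVT_interv (fun x => - Wf b t0 x) (PI/4) (3 * (PI/4))) as [z [hz ez]].
  - intros c hc. apply continuity_pt_opp.
    apply derivable_continuous_pt. exists (Wf' b t0 c). apply Wf_deriv; [lra|].
    pose proof (sin_gt_0 c ltac:(lra) ltac:(lra)). lra.
  - lra.
  - unfold Wf. rewrite cos_PI4, sin_PI4.
    pose proof (g_bound b (t0 + PI/4) hb).
    replace (1 / sqrt 2 / (1 / sqrt 2)) with 1 by (field; lra). lra.
  - unfold Wf. rewrite cos_3PI4, sin_3PI4.
    pose proof (g_bound b (t0 + 3 * (PI/4)) hb).
    replace (-1 / sqrt 2 / (1 / sqrt 2)) with (-1) by (field; lra). lra.
  - exists z. split; auto. lra.
Qed.

Lemma angle_rep c s t0 : c ^ 2 + s ^ 2 = 1 ->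
  exists d, 0 <= d < 2 * PI /\ c = cos (t0 + d) /\ s = sin (t0 + d).
Proof.
  intros e.
  pose proof PI_RGT_0.
  pose proof (sin2_cos2 t0) as e0. unfold Rsqr in e0.
  set (X := c * cos t0 + s * sin t0).
  set (Y := s * cos t0 - c * sin t0).
  assert (eXY : X ^ 2 + Y ^ 2 = 1).
  { transitivity ((c^2+s^2)*(sin t0 * sin t0 + cos t0 * cos t0)); [unfold X, Y; ring|].
    rewrite e, e0; ring. }
  assert (hX : -1 <= X <= 1) by nra.
  assert (hc : c = cos t0 * X - sin t0 * Y).
  { transitivity (c*(sin t0 * sin t0 + cos t0 * cos t0)); [rewrite e0; ring| unfold X, Y; ring]. }
  assert (hs : s = sin t0 * X + cos t0 * Y).
  { transitivity (s*(sin t0 * sin t0 + cos t0 * cos t0)); [rewrite e0; ring| unfold X, Y; ring]. }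
  assert (hsq : sqrt (1 - X²) = Rabs Y).
  { rewrite <- sqrt_Rsqr_abs. f_equal. unfold Rsqr. nra. }
  pose proof (acos_bound X) as hb.
  destruct (Rle_lt_dec 0 Y) as [hY|hY].
  - exists (acos X). split; [lra|].
    rewrite cos_plus, sin_plus, (cos_acos X hX), (sin_acos X hX), hsq, (Rabs_pos_eq Y hY). split; lra.
  - exists (2 * PI - acos X).
    assert (acos X <> 0).
    { intro h. assert (X = 1). { rewrite <- (cos_acos X hX), h. apply cos_0. }
      nra. }
    split; [lra|].
    replace (t0 + (2 * PI - acos X)) with ((t0 + - acos X) + 2 * INR 1 * PI) by (simpl; ring).
    rewrite cos_period, sin_period, cos_plus, sin_plus, cos_neg, sin_neg,
      (cos_acos X hX), (sin_acos X hX), hsq, (Rabs_left Y hY). split; lra.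
Qed.

Lemma b_bounds a : 1 < a -> a <= sqrt 2 -> 0 < a ^ 2 - 1 <= 1.
Proof.
  intros h1 h2. pose proof (sqrt_sqrt 2 ltac:(lra)).
  assert (0 <= sqrt 2) by (apply sqrt_pos). nra.
Qed.

Lemma structure a p : 1 < a -> a <= sqrt 2 -> onY a p ->
  exists t0 t1, p = (a * cos t0, sin t0) /\ t0 < t1 < t0 + 2 * PI /\
   Fd' a p t1 = 0 /\ (forall th, t0 < th < t1 -> 0 < Fd' a p th) /\
   (forall th, t1 < th < t0 + 2 * PI -> Fd' a p th < 0).
Proof.
  intros h1 h2 hp.
  pose proof PI_RGT_0.
  destruct (b_bounds a h1 h2) as [hb1 hb2].
  set (b := a ^ 2 - 1) in *.
  assert (hab : a ^ 2 = 1 + b) by (unfold b; ring).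
  destruct p as [u v]. unfold onY in hp; simpl in hp.
  destruct (angle_rep (u / a) v 0 hp) as [t0 [_ [hu hv]]].
  rewrite Rplus_0_l in hu, hv.
  assert (hu' : u = a * cos t0) by (rewrite <- hu; field; lra).
  rewrite hu', hv.
  destruct (W_zero b t0 ltac:(lra)) as [be1 [hbe1 hW1]].
  assert (key : forall th, t0 < th < t0 + 2 * PI ->
     Fd' a (a * cos t0, sin t0) th =
     4 * sin ((th - t0)/2) ^ 2 * (1 + b * sin (t0 + (th - t0)/2) ^ 2) * Wf b t0 ((th - t0)/2)
     /\ 0 < 4 * sin ((th - t0)/2) ^ 2 * (1 + b * sin (t0 + (th - t0)/2) ^ 2)).
  { intros th hth.
    assert (hs : 0 < sin ((th - t0)/2)) by (apply sin_gt_0; lra).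
    split.
    - rewrite <- (Fd'_W a b t0 ((th - t0) / 2) hab ltac:(lra) ltac:(lra)). f_equal. field.
    - apply Rmult_lt_0_compat; [nra|]. pose proof (pow2_ge_0 (sin (t0 + (th - t0) / 2))). nra. }
  exists t0, (t0 + 2 * be1). split; [reflexivity|].
  split; [lra|]. split; [|split].
  - destruct (key (t0 + 2 * be1) ltac:(lra)) as [e _]. rewrite e.
    replace ((t0 + 2 * be1 - t0) / 2) with be1 by field. rewrite hW1. ring.
  - intros th hth. destruct (key th ltac:(lra)) as [e hpos]. rewrite e.
    apply Rmult_lt_0_compat; auto.
    rewrite <- hW1. apply W_strict; lra.
  - intros th hth. destruct (key th ltac:(lra)) as [e hpos]. rewrite e.
    assert (Wf b t0 ((th - t0) / 2) < 0).
    { rewrite <- hW1. apply W_strict; lra. }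
    nra.
Qed.

Lemma Fd_inc a p x y : (forall th, x < th < y -> 0 < Fd' a p th) -> x < y -> Fd a p x < Fd a p y.
Proof.
  intros hd hxy.
  destruct (MVT_cor2 (Fd a p) (Fd' a p) x y hxy) as [c [e hc]].
  { intros; apply Fd_deriv. }
  pose proof (hd c hc). nra.
Qed.

Lemma Fd_dec a p x y : (forall th, x < th < y -> Fd' a p th < 0) -> x < y -> Fd a p y < Fd a p x.
Proof.
  intros hd hxy.
  destruct (MVT_cor2 (Fd a p) (Fd' a p) x y hxy) as [c [e hc]].
  { intros; apply Fd_deriv. }
  pose proof (hd c hc). nra.
Qed.

Lemma Fd_period a p th : Fd a p (th + 2 * PI) = Fd a p th.
Proof.
  unfold Fd. replace (th + 2 * PI) with (th + 2 * INR 1 * PI) by (simpl; ring).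
  rewrite cos_period, sin_period. reflexivity.
Qed.

Definition gam (a th : R) : point := (a * cos th, sin th).

Lemma edist_gam a p th : edist p (gam a th) = sqrt (Fd a p th).
Proof. reflexivity. Qed.

Lemma onY_gam a th : 0 < a -> onY a (gam a th).
Proof.
  intros ha. unfold onY, gam; simpl. pose proof (sin2_cos2 th). unfold Rsqr in *.
  replace (a * cos th / a) with (cos th) by (field; lra). lra.
Qed.

Lemma Yrep a q t0 : 0 < a -> onY a q -> exists th, t0 <= th < t0 + 2 * PI /\ q = gam a th.
Proof.
  intros ha hq. destruct q as [u v]. unfold onY in hq; simpl in hq.
  destruct (angle_rep (u / a) v t0 hq) as [d [hd [hu hv]]].
  exists (t0 + d). split; [lra|]. unfold gam. rewrite <- hu, <- hv. f_equal. field. lra.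
Qed.

Lemma edist_self p : edist p p = 0.
Proof. unfold edist. rewrite !Rminus_diag. replace ((0:R) ^ 2 + 0 ^ 2) with 0 by ring. apply sqrt_0. Qed.

Lemma edist_ge0 p q : 0 <= edist p q.
Proof. apply sqrt_pos. Qed.

Lemma normal_iff a p th : 0 < a -> (on_normal a (gam a th) p <-> Fd' a p th = 0).
Proof.
  intros ha. destruct p as [u v]. unfold on_normal, gam, Fd'; simpl. split.
  - intros [t [e1 e2]]. rewrite e1, e2. field. lra.
  - intros e.
    destruct (Req_dec (cos th) 0) as [hc|hc].
    + pose proof (sin2_cos2 th) as q. unfold Rsqr in q.
      assert (hs : sin th <> 0) by nra.
      rewrite hc in e |- *.
      exists ((v - sin th) / sin th). split.
      * assert (u * (a * sin th) = 0) by nra.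
        assert (u = 0).
        { destruct (Rmult_integral _ _ H) as [h|h]; auto. exfalso. apply hs.
          destruct (Rmult_integral _ _ h); [lra|auto]. }
        subst u. field. lra.
      * field. auto.
    + exists (a * (u - a * cos th) / cos th). split.
      * field. split; lra.
      * apply Rmult_eq_reg_r with (cos th); auto.
        field_simplify; auto. nra.
Qed.

Lemma sqrt_lt_bound A e : 0 <= A -> 0 < e -> A < e ^ 2 -> sqrt A < e.
Proof.
  intros hA he h. rewrite <- (sqrt_pow2 e) by lra. apply sqrt_lt_1_alt; lra.
Qed.

Lemma cont_pt_eps f x : continuity_pt f x -> forall eps, 0 < eps ->
  exists d, 0 < d /\ forall y, Rabs (y - x) < d -> Rabs (f y - f x) < eps.
Proof.
  intros hc eps he. destruct (hc eps he) as [d [hd H]].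
  exists d. split; auto. intros y hy.
  destruct (Req_dec y x) as [->|hne].
  - rewrite Rminus_diag, Rabs_R0. auto.
  - apply (H y). split; [split; [exact I| auto]| exact hy].
Qed.

Lemma gam_cont a th : 0 < a -> forall eps, 0 < eps ->
  exists d, 0 < d /\ forall th', Rabs (th' - th) < d -> edist (gam a th') (gam a th) < eps.
Proof.
  intros ha eps he.
  destruct (cont_pt_eps cos th (continuity_cos th) (eps / (2 * a))) as [d1 [hd1 H1]].
  { apply Rdiv_lt_0_compat; lra. }
  destruct (cont_pt_eps sin th (continuity_sin th) (eps / 2)) as [d2 [hd2 H2]]; [lra|].
  exists (Rmin d1 d2). split; [apply Rmin_pos; auto|].
  intros th' h.
  assert (h1 : Rabs (cos th' - cos th) < eps / (2 * a)) by (apply H1; pose proof (Rmin_l d1 d2); lra).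
  assert (h2 : Rabs (sin th' - sin th) < eps / 2) by (apply H2; pose proof (Rmin_r d1 d2); lra).
  unfold edist, gam; cbn [fst snd]. apply sqrt_lt_bound; [apply Rplus_le_le_0_compat; apply pow2_ge_0|auto|].
  replace ((a * cos th' - a * cos th) ^ 2) with (a ^ 2 * (cos th' - cos th) ^ 2) by ring.
  assert (e1 : (cos th' - cos th) ^ 2 = Rabs (cos th' - cos th) ^ 2).
  { rewrite <- !Rsqr_pow2. apply Rsqr_abs. }
  assert (e2 : (sin th' - sin th) ^ 2 = Rabs (sin th' - sin th) ^ 2).
  { rewrite <- !Rsqr_pow2. apply Rsqr_abs. }
  rewrite e1, e2.
  pose proof (Rabs_pos (cos th' - cos th)). pose proof (Rabs_pos (sin th' - sin th)).
  assert (h1' : a * Rabs (cos th' - cos th) < eps / 2).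
  { apply Rmult_lt_reg_r with (/ a). apply Rinv_0_lt_compat; lra.
    replace (a * Rabs (cos th' - cos th) * / a) with (Rabs (cos th' - cos th)) by (field; lra).
    replace (eps / 2 * / a) with (eps / (2 * a)) by (field; lra). auto. }
  set (A := Rabs (cos th' - cos th)) in *. set (B := Rabs (sin th' - sin th)) in *.
  assert (k0 : 0 <= a * A) by nra.
  assert (k1 : (a * A) ^ 2 < (eps / 2) ^ 2) by nra.
  assert (k2 : B ^ 2 < (eps / 2) ^ 2) by nra.
  replace (a ^ 2 * A ^ 2) with ((a * A) ^ 2) by ring. nra.
Qed.

Lemma Fd_ge0 a p th : 0 <= Fd a p th.
Proof. unfold Fd. pose proof (pow2_ge_0 (fst p - a * cos th)). pose proof (pow2_ge_0 (snd p - sin th)). lra. Qed.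

Lemma not_ext a p th : 0 < a ->
  (forall eta, 0 < eta -> exists x y, Rabs (x - th) < eta /\ Rabs (y - th) < eta /\
       Fd a p x < Fd a p th /\ Fd a p th < Fd a p y) ->
  ~ local_extremum_on (onY a) (edist p) (gam a th).
Proof.
  intros ha H [[_ [eps [he hm]]] | [_ [eps [he hm]]]];
  destruct (gam_cont a th ha eps he) as [d [hd hc]];
  destruct (H d hd) as [x [y [hx [hy [h1 h2]]]]].
  - specialize (hm (gam a x) (onY_gam a x ha) (hc x hx)).
    rewrite !edist_gam in hm.
    pose proof (sqrt_lt_1_alt (Fd a p x) (Fd a p th) (conj (Fd_ge0 _ _ _) h1)). lra.
  - specialize (hm (gam a y) (onY_gam a y ha) (hc y hy)).
    rewrite !edist_gam in hm.
    pose proof (sqrt_lt_1_alt (Fd a p th) (Fd a p y) (conj (Fd_ge0 _ _ _) h2)). lra.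
Qed.

Record pdata (a : R) (p : point) (t0 t1 : R) : Prop := {
  pd_p : p = gam a t0;
  pd_lt : t0 < t1 < t0 + 2 * PI;
  pd_crit : Fd' a p t1 = 0;
  pd_inc : forall x y, t0 <= x -> x < y -> y <= t1 -> Fd a p x < Fd a p y;
  pd_dec : forall x y, t1 <= x -> x < y -> y <= t0 + 2 * PI -> Fd a p y < Fd a p x;
  pd_pos : forall th, t0 < th < t1 -> 0 < Fd' a p th;
  pd_neg : forall th, t1 < th < t0 + 2 * PI -> Fd' a p th < 0 }.

Lemma get_pdata a p : 1 < a -> a <= sqrt 2 -> onY a p -> exists t0 t1, pdata a p t0 t1.
Proof.
  intros h1 h2 hp.
  destruct (structure a p h1 h2 hp) as [t0 [t1 [ep [hl [hc [hpos hneg]]]]]].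
  exists t0, t1. constructor; auto.
  - intros x y hx hxy hy. apply Fd_inc; auto. intros th hth; apply hpos; lra.
  - intros x y hx hxy hy. apply Fd_dec; auto. intros th hth; apply hneg; lra.
Qed.

Lemma Fd_t0 a p t0 : p = gam a t0 -> Fd a p t0 = 0.
Proof. intros ->. unfold Fd, gam; cbn [fst snd]. ring. Qed.

Lemma pd_max a p t0 t1 : pdata a p t0 t1 -> forall th, t0 <= th <= t0 + 2 * PI ->
  Fd a p th <= Fd a p t1 /\ (Fd a p th = Fd a p t1 -> th = t1).
Proof.
  intros [ep hl hc hinc hdec _ _] th hth.
  destruct (Rtotal_order th t1) as [h|[h|h]].
  - pose proof (hinc th t1 ltac:(lra) h ltac:(lra)). split; intros; lra.
  - subst; split; auto; lra.
  - pose proof (hdec t1 th ltac:(lra) h ltac:(lra)). split; intros; lra.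
Qed.

Lemma hrel_iff a p t0 t1 th : 0 < a -> pdata a p t0 t1 -> t0 <= th < t0 + 2 * PI ->
  (h_rel a (gam a th) p <-> th = t1).
Proof.
  intros ha pd hth. pose proof pd as [ep hl hc hinc hdec hpos hneg].
  split.
  - intros [_ [_ [hne hn]]].
    apply (normal_iff a p th ha) in hn.
    destruct (Req_dec th t0) as [e|ne].
    { subst th. exfalso. apply hne. auto. }
    destruct (Rtotal_order th t1) as [h|[h|h]]; auto.
    + pose proof (hpos th ltac:(lra)). lra.
    + pose proof (hneg th ltac:(lra)). lra.
  - intros ->. split; [apply onY_gam; auto|]. split; [rewrite ep; apply onY_gam; auto|].
    split.
    + intro e. pose proof (Fd_t0 a p t1 e).
      pose proof (Fd_t0 a p t0 ep).
      pose proof (hinc t0 t1 ltac:(lra) ltac:(lra) ltac:(lra)). lra.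
    + apply normal_iff; auto.
Qed.

Lemma part1 a p : 1 < a -> a <= sqrt 2 -> onY a p ->
     (forall q, local_extremum_on (onY a) (edist p) q <->
                  (q = p \/ h_rel a q p)) /\
     global_min_on (onY a) (edist p) p /\
     (exists q, h_rel a q p) /\
     (forall q, h_rel a q p -> global_max_on (onY a) (edist p) q).
Proof.
  intros h1 h2 hp. assert (ha : 0 < a) by lra.
  pose proof PI_RGT_0.
  destruct (get_pdata a p h1 h2 hp) as [t0 [t1 pd]].
  pose proof pd as [ep hl hc hinc hdec hpos hneg].
  assert (gmin : global_min_on (onY a) (edist p) p).
  { split; auto. intros r _. rewrite edist_self. apply edist_ge0. }
  assert (gmax : forall q, h_rel a q p -> global_max_on (onY a) (edist p) q).
  { intros q hq. pose proof hq as [hqY _].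
    destruct (Yrep a q t0 ha hqY) as [th [hth ->]].
    apply (hrel_iff a p t0 t1 th ha pd hth) in hq. subst th.
    split; auto. intros r hr.
    destruct (Yrep a r t0 ha hr) as [th [hth' ->]].
    rewrite !edist_gam. apply sqrt_le_1_alt.
    apply (pd_max a p t0 t1 pd th); lra. }
  split; [|split; [auto|split; [|auto]]].
  - intros q. split.
    + intros hext.
      assert (hqY : onY a q) by (destruct hext as [[h _]|[h _]]; auto).
      destruct (Yrep a q t0 ha hqY) as [th [hth ->]].
      destruct (Req_dec th t0) as [e|n0].
      { left. subst th. auto. }
      destruct (Req_dec th t1) as [e|n1].
      { right. apply (hrel_iff a p t0 t1 th ha pd hth). auto. }
      exfalso. revert hext. apply not_ext; auto.
      intros eta heta.
      destruct (Rlt_le_dec th t1) as [k|k].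
      * set (e := Rmin eta (Rmin (th - t0) (t1 - th)) / 2).
        assert (he : 0 < e /\ e < eta /\ e < th - t0 /\ e < t1 - th).
        { unfold e. pose proof (Rmin_l eta (Rmin (th - t0) (t1 - th))).
          pose proof (Rmin_r eta (Rmin (th - t0) (t1 - th))).
          pose proof (Rmin_l (th - t0) (t1 - th)). pose proof (Rmin_r (th - t0) (t1 - th)).
          assert (0 < Rmin eta (Rmin (th - t0) (t1 - th))) by (repeat apply Rmin_pos; lra).
          lra. }
        exists (th - e), (th + e).
        replace (th - e - th) with (- e) by ring. replace (th + e - th) with e by ring.
        rewrite Rabs_Ropp, Rabs_pos_eq by lra.
        split; [lra|]. split; [lra|]. split; apply hinc; lra.
      * assert (k' : t1 < th) by lra.
        set (e := Rmin eta (Rmin (th - t1) (t0 + 2 * PI - th)) / 2).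
        assert (he : 0 < e /\ e < eta /\ e < th - t1 /\ e < t0 + 2 * PI - th).
        { unfold e. pose proof (Rmin_l eta (Rmin (th - t1) (t0 + 2 * PI - th))).
          pose proof (Rmin_r eta (Rmin (th - t1) (t0 + 2 * PI - th))).
          pose proof (Rmin_l (th - t1) (t0 + 2 * PI - th)). pose proof (Rmin_r (th - t1) (t0 + 2 * PI - th)).
          assert (0 < Rmin eta (Rmin (th - t1) (t0 + 2 * PI - th))) by (repeat apply Rmin_pos; lra).
          lra. }
        exists (th + e), (th - e).
        replace (th - e - th) with (- e) by ring. replace (th + e - th) with e by ring.
        rewrite Rabs_Ropp, Rabs_pos_eq by lra.
        split; [lra|]. split; [lra|]. split; apply hdec; lra.
    + intros [->|hq].
      * left. destruct gmin as [g1 g2]. split; auto. exists 1. split; [lra|]. intros; auto.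
      * right. destruct (gmax q hq) as [g1 g2]. split; auto. exists 1. split; [lra|]. intros; auto.
  - exists (gam a t1). apply (hrel_iff a p t0 t1 t1 ha pd); auto. lra.
Qed.

Lemma cont_R_ext (f : R -> R) (x : R) : continuity_pt f x -> continuous f x.
Proof. intros h. apply continuity_pt_filterlim. auto. Qed.

Definition Xr (a k : R) (w : R * R) : R := cos k * (fst w / a) + sin k * snd w.
Definition Yr (a k : R) (w : R * R) : R := cos k * snd w - sin k * (fst w / a).
Definition sgm (a k : R) (w : R * R) : R := 2 * atan (Yr a k w / (1 + Xr a k w)).
Definition Phi (a k ss : R) (z : R * (R * R)) : R :=
  k + (1 - fst z) * sgm a k (snd z) + fst z * ss.

Lemma cont_Xr a k (z : R * (R * R)) : continuous (fun z : R * (R * R) => Xr a k (snd z)) z.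
Proof.
  unfold Xr.
  apply (continuous_plus (fun z : R * (R * R) => cos k * (fst (snd z) / a)) (fun z => sin k * snd (snd z))).
  - apply (continuous_mult (fun _ => cos k) (fun z : R * (R * R) => fst (snd z) / a)).
    + apply continuous_const.
    + apply (continuous_mult (fun z : R * (R * R) => fst (snd z)) (fun _ => / a)).
      * apply (continuous_comp snd fst). apply continuous_snd. destruct z as [t [x y]]. apply continuous_fst.
      * apply continuous_const.
  - apply (continuous_mult (fun _ => sin k) (fun z : R * (R * R) => snd (snd z))).
    + apply continuous_const.
    + apply (continuous_comp snd snd). apply continuous_snd. destruct z as [t [x y]]. apply continuous_snd.
Qed.

Lemma cont_Yr a k (z : R * (R * R)) : continuous (fun z : R * (R * R) => Yr a k (snd z)) z.
Proof.
  unfold Yr.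
  apply (continuous_plus (fun z : R * (R * R) => cos k * snd (snd z)) (fun z => opp (sin k * (fst (snd z) / a)))).
  - apply (continuous_mult (fun _ => cos k) (fun z : R * (R * R) => snd (snd z))).
    + apply continuous_const.
    + apply (continuous_comp snd snd). apply continuous_snd. destruct z as [t [x y]]. apply continuous_snd.
  - apply (continuous_opp (fun z : R * (R * R) => sin k * (fst (snd z) / a))).
    apply (continuous_mult (fun _ => sin k) (fun z : R * (R * R) => fst (snd z) / a)).
    + apply continuous_const.
    + apply (continuous_mult (fun z : R * (R * R) => fst (snd z)) (fun _ => / a)).
      * apply (continuous_comp snd fst). apply continuous_snd. destruct z as [t [x y]]. apply continuous_fst.
      * apply continuous_const.
Qed.

Lemma cont_inv x : x <> 0 -> continuous (fun y : R => / y) x.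
Proof.
  intros h. apply cont_R_ext.
  apply (continuity_pt_inv id x (continuity_pt_id x) h).
Qed.

Lemma cont_atan x : continuous atan x.
Proof.
  apply cont_R_ext. apply derivable_continuous_pt. exists (/ (1 + x ^ 2)).
  apply derivable_pt_lim_atan.
Qed.

Lemma cont_sig a k (z : R * (R * R)) : 1 + Xr a k (snd z) <> 0 ->
  continuous (fun z : R * (R * R) => sgm a k (snd z)) z.
Proof.
  intros h. unfold sgm.
  apply (continuous_mult (fun _ => 2) (fun z : R * (R * R) => atan (Yr a k (snd z) / (1 + Xr a k (snd z))))).
  - apply continuous_const.
  - apply (continuous_comp (fun z : R * (R * R) => Yr a k (snd z) / (1 + Xr a k (snd z))) atan).
    + apply (continuous_mult (fun z : R * (R * R) => Yr a k (snd z)) (fun z => / (1 + Xr a k (snd z)))).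
      * apply cont_Yr.
      * apply (continuous_comp (fun z : R * (R * R) => 1 + Xr a k (snd z)) (fun y => / y)).
        -- apply (continuous_plus (fun _ : R * (R * R) => 1) (fun z => Xr a k (snd z))).
           apply continuous_const. apply cont_Xr.
        -- apply cont_inv. auto.
    + apply cont_atan.
Qed.

Lemma cont_Phi a k ss (z : R * (R * R)) : 1 + Xr a k (snd z) <> 0 ->
  continuous (Phi a k ss) z.
Proof.
  intros h. unfold Phi.
  apply (continuous_plus (fun z : R * (R * R) => k + (1 - fst z) * sgm a k (snd z)) (fun z => fst z * ss)).
  - apply (continuous_plus (fun _ : R * (R * R) => k) (fun z => (1 - fst z) * sgm a k (snd z))).
    + apply continuous_const.
    + apply (continuous_mult (fun z : R * (R * R) => 1 - fst z) (fun z => sgm a k (snd z))).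
      * apply (continuous_plus (fun _ : R * (R * R) => 1) (fun z => opp (fst z))).
        apply continuous_const. apply (continuous_opp (fun z : R * (R * R) => fst z)).
        destruct z as [t w]. apply continuous_fst.
      * apply cont_sig. auto.
  - apply (continuous_mult (fun z : R * (R * R) => fst z) (fun _ => ss)).
    + destruct z as [t w]. apply continuous_fst.
    + apply continuous_const.
Qed.

Lemma cont_eps (f : R * (R * R) -> R) z : continuous f z ->
  forall eps, 0 < eps -> exists d, 0 < d /\ forall z',
    Rabs (fst z' - fst z) < d -> Rabs (fst (snd z') - fst (snd z)) < d ->
    Rabs (snd (snd z') - snd (snd z)) < d -> Rabs (f z' - f z) < eps.
Proof.
  intros hc eps he.
  destruct (proj1 (filterlim_locally f (f z)) hc (mkposreal eps he)) as [d hd].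
  exists d. split; [apply cond_pos|]. intros z' h1 h2 h3. apply hd.
  destruct z as [t [x y]]; destruct z' as [t' [x' y']]; simpl in *.
  split; [|split]; auto.
Qed.

Lemma half_angle X Y : X ^ 2 + Y ^ 2 = 1 -> 1 + X <> 0 ->
  cos (2 * atan (Y / (1 + X))) = X /\ sin (2 * atan (Y / (1 + X))) = Y.
Proof.
  intros e h.
  set (u := Y / (1 + X)).
  assert (hr : 0 < 1 + u²) by (pose proof (Rle_0_sqr u); lra).
  assert (hs : sqrt (1 + u²) * sqrt (1 + u²) = 1 + u²) by (apply sqrt_sqrt; lra).
  assert (hs0 : sqrt (1 + u²) <> 0) by (pose proof (sqrt_lt_R0 _ hr); lra).
  assert (hX : 0 < 1 + X).
  { destruct (Rle_lt_dec (1 + X) 0); auto. assert (X <= -1) by lra. nra. }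
  rewrite cos_2a, sin_2a, cos_atan, sin_atan.
  set (r := sqrt (1 + u²)) in *.
  split.
  - transitivity ((1 - u²) / (1 + u²)).
    { unfold Rdiv. rewrite <- hs. unfold Rsqr. field. auto. }
    unfold u, Rsqr. field_simplify; [|split; [lra|nra]].
    replace (Y ^ 2) with (1 - X ^ 2) by lra.
    replace (- (1 - X ^ 2) + X ^ 2 + 2 * X + 1) with (2 * X * (1 + X)) by ring.
    replace (1 - X ^ 2 + X ^ 2 + 2 * X + 1) with (2 * (1 + X)) by ring. field. lra.
  - transitivity (2 * u / (1 + u²)).
    { unfold Rdiv. rewrite <- hs. unfold Rsqr. field. auto. }
    unfold u, Rsqr. field_simplify; [|split; [lra|nra]].
    replace (Y ^ 2) with (1 - X ^ 2) by lra.
    replace (1 - X ^ 2 + X ^ 2 + 2 * X + 1) with (2 * (1 + X)) by ring. field. lra.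
Qed.

Lemma sig_prop a t1 q : 0 < a -> onY a q -> q <> gam a t1 ->
  1 + Xr a (t1 + PI) q <> 0 /\ - PI < sgm a (t1 + PI) q < PI /\
  gam a (t1 + PI + sgm a (t1 + PI) q) = q.
Proof.
  intros ha hq hne.
  set (k := t1 + PI).
  destruct q as [x y]. unfold onY in hq; cbn [fst snd] in hq.
  set (c' := x / a) in *.
  pose proof (sin2_cos2 k) as ek. unfold Rsqr in ek.
  set (X := Xr a k (x, y)). set (Y := Yr a k (x, y)).
  assert (eXY : X ^ 2 + Y ^ 2 = 1).
  { transitivity ((c'^2+y^2)*(sin k * sin k + cos k * cos k)); [unfold X, Y, Xr, Yr; cbn [fst snd]; fold c'; ring|].
    rewrite hq, ek; ring. }
  assert (hc : c' = cos k * X - sin k * Y).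
  { transitivity (c'*(sin k * sin k + cos k * cos k)); [rewrite ek; ring| unfold X, Y, Xr, Yr; cbn [fst snd]; fold c'; ring]. }
  assert (hs : y = sin k * X + cos k * Y).
  { transitivity (y*(sin k * sin k + cos k * cos k)); [rewrite ek; ring| unfold X, Y, Xr, Yr; cbn [fst snd]; fold c'; ring]. }
  assert (hX : 1 + X <> 0).
  { intro h0. apply hne. assert (X = -1) by lra. assert (Y = 0) by nra.
    unfold gam. unfold k in hc, hs. rewrite neg_cos, neg_sin in hc, hs.
    assert (x = a * c') by (unfold c'; field; lra).
    f_equal; [rewrite H1, hc|rewrite hs]; rewrite H, H0; ring. }
  split; auto.
  unfold sgm. fold X Y.
  pose proof (atan_bound (Y / (1 + X))).
  split; [lra|].
  destruct (half_angle X Y eXY hX) as [h1 h2].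
  unfold gam. rewrite cos_plus, sin_plus, h1, h2.
  f_equal.
  - rewrite <- hc. unfold c'. field. lra.
  - rewrite hs. ring.
Qed.

Lemma edist_sym p q : edist p q = edist q p.
Proof. unfold edist. f_equal. ring. Qed.

Lemma coord_le p q : Rabs (fst p - fst q) <= edist p q /\ Rabs (snd p - snd q) <= edist p q.
Proof.
  unfold edist. split.
  - rewrite <- sqrt_Rsqr_abs. apply sqrt_le_1_alt. rewrite Rsqr_pow2.
    pose proof (pow2_ge_0 (snd p - snd q)). lra.
  - rewrite <- sqrt_Rsqr_abs. apply sqrt_le_1_alt. rewrite Rsqr_pow2.
    pose proof (pow2_ge_0 (fst p - fst q)). lra.
Qed.

Lemma unimodal a p t0 t1 : pdata a p t0 t1 -> forall s1 s, - PI < s1 < PI ->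
  (s1 <= s <= t0 + PI - t1 \/ t0 + PI - t1 <= s <= s1) ->
  Fd a p (t1 + PI + s) <= Fd a p (t1 + PI + s1).
Proof.
  intros pd s1 s hs1 hs. pose proof pd as [ep hl hc hinc hdec _ _].
  destruct (Req_dec s s1) as [->|ne]; [lra|].
  destruct hs as [hs|hs].
  - left. apply hdec; lra.
  - assert (e1 : forall z, Fd a p z = Fd a p (z - 2 * PI)).
    { intros z. rewrite <- (Fd_period a p (z - 2 * PI)). f_equal. ring. }
    rewrite (e1 (t1 + PI + s)), (e1 (t1 + PI + s1)).
    left. apply hinc; lra.
Qed.

Lemma part2 a c (P : R -> Prop) : 1 < a -> a <= sqrt 2 -> onY a c ->
  (forall d1 d2, 0 <= d1 <= d2 -> P d2 -> P d1) ->
  (exists q, onY a q /\ P (edist c q)) ->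
  contractible (fun q => onY a q /\ P (edist c q)) \/ (forall q, onY a q -> P (edist c q)).
Proof.
  intros h1 h2 hc hP [q0 [hq0 hPq0]].
  assert (ha : 0 < a) by lra. pose proof PI_RGT_0.
  destruct (get_pdata a c h1 h2 hc) as [t0 [t1 pd]].
  pose proof pd as [ep hl hcr hinc hdec _ _].
  destruct (classic (P (edist c (gam a t1)))) as [hm|hm].
  { right. intros q hq. destruct (Yrep a q t0 ha hq) as [th [hth ->]].
    apply (hP _ (edist c (gam a t1))); auto. split; [apply edist_ge0|].
    rewrite !edist_gam. apply sqrt_le_1_alt. apply (pd_max a c t0 t1 pd th). lra. }
  left.
  set (k := t1 + PI). set (ss := t0 + PI - t1).
  assert (hneq : forall q, onY a q /\ P (edist c q) -> q <> gam a t1).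
  { intros q [_ hq] e. subst q. auto. }
  exists c, (fun t q => gam a (Phi a k ss (t, q))).
  assert (hP0 : P (edist c c)).
  { rewrite edist_self. apply (hP _ (edist c q0)); auto. split; [lra|apply edist_ge0]. }
  split; [split; auto|]. split; [|split; [|split]].
  - intros t q ht hq. split; [apply onY_gam; auto|].
    destruct (sig_prop a t1 q ha (proj1 hq) (hneq q hq)) as [hX [hsig hg]]. fold k in hX, hsig, hg.
    apply (hP _ (edist c q)); [|apply hq].
    split; [apply edist_ge0|].
    rewrite <- hg at 2. rewrite !edist_gam. apply sqrt_le_1_alt.
    unfold Phi; cbn [fst snd]. fold k.
    replace (k + (1 - t) * sgm a k q + t * ss) with (t1 + PI + ((1 - t) * sgm a k q + t * ss)) by (unfold k; ring).
    apply (unimodal a c t0 t1 pd); [exact hsig|].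
    fold ss. set (sq := sgm a k q) in *.
    destruct (Rle_lt_dec sq ss) as [r|r]; [left|right].
    + assert (0 <= t * (ss - sq)) by (apply Rmult_le_pos; lra).
      assert (0 <= (1 - t) * (ss - sq)) by (apply Rmult_le_pos; lra). split; nra.
    + assert (0 <= t * (sq - ss)) by (apply Rmult_le_pos; lra).
      assert (0 <= (1 - t) * (sq - ss)) by (apply Rmult_le_pos; lra). split; nra.
  - intros q hq.
    destruct (sig_prop a t1 q ha (proj1 hq) (hneq q hq)) as [hX [hsig hg]]. fold k in hX, hsig, hg.
    unfold Phi; cbn [fst snd]. fold k in hg. rewrite <- hg at 2. f_equal. ring.
  - intros q hq. unfold Phi; cbn [fst snd].
    rewrite ep. unfold gam. replace (k + (1 - 1) * sgm a k q + 1 * ss) with (t0 + 2 * INR 1 * PI)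
      by (unfold k, ss; simpl; ring).
    rewrite cos_period, sin_period. reflexivity.
  - intros t q ht hq eps he.
    destruct (sig_prop a t1 q ha (proj1 hq) (hneq q hq)) as [hX [hsig hg]]. fold k in hX, hsig, hg.
    destruct (gam_cont a (Phi a k ss (t, q)) ha eps he) as [eta [heta hgc]].
    destruct (cont_eps (Phi a k ss) (t, q) (cont_Phi a k ss (t, q) hX) eta heta) as [d [hd hcd]].
    exists d. split; auto.
    intros t' q' ht' hq' htt hqq.
    rewrite edist_sym. apply hgc. apply hcd; cbn [fst snd].
    + rewrite Rabs_minus_sym. auto.
    + destruct (coord_le q q'). rewrite Rabs_minus_sym. exact (Rle_lt_trans _ _ _ H0 hqq).
    + destruct (coord_le q q'). rewrite Rabs_minus_sym. exact (Rle_lt_trans _ _ _ H1 hqq).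
Qed.

Theorem mainTheorem15 (a : R) (ha : 1 < a) (ha2 : a <= sqrt 2) :
  (forall p : point, onY a p ->
     (* the only local extrema of d_p are p and h^{-1}(p) *)
     (forall q, local_extremum_on (onY a) (edist p) q <->
                  (q = p \/ h_rel a q p)) /\
     global_min_on (onY a) (edist p) p /\
     (exists q, h_rel a q p) /\
     (forall q, h_rel a q p -> global_max_on (onY a) (edist p) q)) /\
  (* consequence: nonempty intersections of Y with balls centered on Y *)
  (forall (c : point) (r : R), onY a c ->
     ((exists q, onY a q /\ open_ball c r q) ->
        contractible (fun q => onY a q /\ open_ball c r q) \/
        (forall q, onY a q -> open_ball c r q)) /\
     ((exists q, onY a q /\ closed_ball c r q) ->
        contractible (fun q => onY a q /\ closed_ball c r q) \/
        (forall q, onY a q -> closed_ball c r q))).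
Proof.
  split.
  - intros p hp. apply part1; auto.
  - intros c r hc. unfold open_ball, closed_ball. split.
    + intros hne. apply (part2 a c (fun d => d < r)); auto. intros; lra.
    + intros hne. apply (part2 a c (fun d => d <= r)); auto. intros; lra.
Qed.
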